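(* Let $m\in\{2,3,\dots\}\cup\{\infty\}$, $\gamma\in(0,1)$, and let $T_n$ be uniformly distributed on $\mathsf{T}^{(m)}_n$. Let $A^\gamma_n$ be the set of trees $t\in\mathsf{T}^{(m)}_n$ having at least one vertex $v$ such that at least two of the subtrees rooted at children of $v$ are equal (as unordered rooted trees) and have at least $n^\gamma$ vertices. Then $\mathbb{P}(T_n\in A^\gamma_n)=O(\rho_m^{-n^\gamma}n^{5/2})$ as $n\to\infty$.
   Context: $\mathsf{T}^{(m)}_n$ is the set of rooted unordered trees with $n$ vertices in which every vertex has at most $m$ children. By Otter's theorem, $\#\mathsf{T}^{(m)}_n\sim\kappa_m\rho_m^nn^{-3/2}$ for constants $\kappa_m>0$, $\rho_m>1$. *)

(* Defs.v *)
From Stdlib Require Import Reals Lra Lia List Permutation ClassicalEpsilon.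
Import ListNotations.
Open Scope R_scope.

Inductive otree : Type := ONode : list otree -> otree.

Fixpoint osize (t : otree) : nat :=
  match t with ONode l => S (list_sum (map osize l)) end.

(* Isomorphism of rooted trees as UNORDERED trees: children lists agree up to
   a permutation, recursively. *)
Inductive oiso : otree -> otree -> Prop :=
  oiso_node (l1 l2 l3 : list otree) :
    Forall2 oiso l1 l3 -> Permutation l3 l2 -> oiso (ONode l1) (ONode l2).

Inductive subtree : otree -> otree -> Prop :=
  | st_refl t : subtree t t
  | st_child s c l : In c l -> subtree s c -> subtree s (ONode l).

(* Branching bound m in {2,3,...} ∪ {∞}: Some k = k, None = ∞. *)
Definition valid_m (m : option nat) : Prop :=
  m = None \/ exists k, m = Some k /\ (2 <= k)%nat.

Definition children_ok (m : option nat) (l : list otree) : Prop :=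
  match m with Some k => (length l <= k)%nat | None => True end.

(* t (an ordered representative) has n vertices and every vertex has at most m
   children.  The set T^(m)_n is the set of oiso-classes of such trees. *)
Definition Tm (m : option nat) (n : nat) (t : otree) : Prop :=
  osize t = n /\ forall l, subtree (ONode l) t -> children_ok m l.

(* [nclasses P k]: the predicate P (assumed oiso-invariant) contains exactly k
   oiso-classes: a list of k pairwise non-isomorphic elements of P meeting
   every class of P. *)
Definition nclasses (P : otree -> Prop) (k : nat) : Prop :=
  exists s : list otree, length s = k /\ Forall P s /\
    ForallOrdPairs (fun a b => ~ oiso a b) s /\
    forall t, P t -> exists u, In u s /\ oiso t u.

Definition ncl (P : otree -> Prop) : nat := epsilon (inhabits 0%nat) (nclasses P).

Definition cardT (m : option nat) (n : nat) : nat := ncl (Tm m n).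

Definition inA (gamma : R) (n : nat) (t : otree) : Prop :=
  exists l, subtree (ONode l) t /\
    exists i j, (i < j < length l)%nat /\
      oiso (nth i l (ONode nil)) (nth j l (ONode nil)) /\
      Rpower (INR n) gamma <= INR (osize (nth i l (ONode nil))).

Definition probA (m : option nat) (gamma : R) (n : nat) : R :=
  INR (ncl (fun t => Tm m n t /\ inA gamma n t)) / INR (cardT m n).

Definition otter_asymp (m : option nat) (kappa rho : R) : Prop :=
  Un_cv (fun n => INR (cardT m n) / (kappa * rho ^ n * Rpower (INR n) (-3/2))) 1.

(* Main.v *)
Require Import Defs.
From Stdlib Require Import Reals Lra Lia List Permutation ClassicalEpsilon Classical.
Import ListNotations.
Open Scope R_scope.

Fixpoint otree_ind2 (P : otree -> Prop) (H : forall l, Forall P l -> P (ONode l))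
  (t : otree) : P t :=
  match t with ONode l => H l ((fix aux l := match l return Forall P l with
     | [] => Forall_nil _ | c :: l' => Forall_cons _ (otree_ind2 P H c) (aux l') end) l) end.

Lemma oiso_inv l1 l2 : oiso (ONode l1) (ONode l2) ->
  exists l3, Forall2 oiso l1 l3 /\ Permutation l3 l2.
Proof. intro H; inversion H; subst; eauto. Qed.

Lemma oiso_refl t : oiso t t.
Proof.
  induction t using otree_ind2.
  apply oiso_node with l; [|apply Permutation_refl].
  induction H; constructor; auto.
Qed.

Lemma oiso_sym t1 t2 : oiso t1 t2 -> oiso t2 t1.
Proof.
  revert t2; induction t1 as [l1 IH] using otree_ind2; intros [l2] H.
  destruct (oiso_inv _ _ H) as [l3 [F P]].
  assert (F' : Forall2 oiso l3 l1).
  { clear H P. induction F; constructor; inversion IH; subst; auto. }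
  destruct (Permutation_Forall2 P F') as [l4 [P4 F4]].
  apply oiso_node with l4; auto. now apply Permutation_sym.
Qed.

Lemma oiso_trans t1 t2 t3 : oiso t1 t2 -> oiso t2 t3 -> oiso t1 t3.
Proof.
  revert t2 t3; induction t1 as [l1 IH] using otree_ind2; intros [l2] [l5] H H'.
  destruct (oiso_inv _ _ H) as [l3 [F P]].
  destruct (oiso_inv _ _ H') as [l4 [F' P']].
  destruct (Permutation_Forall2 (Permutation_sym P) F') as [l6 [P6 F6]].
  apply oiso_node with l6; [| eapply Permutation_trans; [apply Permutation_sym, P6| exact P']].
  clear H H' P P' F' P6. revert l6 F6; induction F; intros l6 F6; inversion F6; subst; constructor.
  - inversion IH; subst; eauto.
  - inversion IH; subst; eauto.
Qed.

Lemma list_sum_perm (l1 l2 : list nat) : Permutation l1 l2 -> list_sum l1 = list_sum l2.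
Proof. induction 1; simpl; lia. Qed.

Lemma osize_iso t1 t2 : oiso t1 t2 -> osize t1 = osize t2.
Proof.
  revert t2; induction t1 as [l1 IH] using otree_ind2; intros [l2] H.
  destruct (oiso_inv _ _ H) as [l3 [F P]]. simpl. f_equal.
  rewrite <- (list_sum_perm _ _ (Permutation_map osize P)).
  clear P H. induction F; simpl; auto. inversion IH; subst. f_equal; auto.
Qed.

Fixpoint modlist (i : nat) (g : otree -> otree) (l : list otree) : list otree :=
  match l, i with
  | [], _ => []
  | x :: l', O => g x :: l'
  | x :: l', S i' => x :: modlist i' g l'
  end.

Fixpoint modat (p : list nat) (f : otree -> otree) (t : otree) : otree :=
  match p with
  | [] => f t
  | i :: p' => match t with ONode l => ONode (modlist i (modat p' f) l) end
  end.

Fixpoint at_ (p : list nat) (t : otree) : otree :=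
  match p with
  | [] => t
  | i :: p' => match t with ONode l => at_ p' (nth i l (ONode [])) end
  end.

Fixpoint valid (p : list nat) (t : otree) : Prop :=
  match p with
  | [] => True
  | i :: p' => match t with ONode l => (i < length l)%nat /\ valid p' (nth i l (ONode [])) end
  end.

Lemma subtree_path u t : subtree u t -> exists p, valid p t /\ at_ p t = u.
Proof.
  induction 1. - exists []; simpl; auto.
  - destruct IHsubtree as [p [V A]].
    destruct (In_nth _ _ (ONode []) H) as [i [Hi Hn]].
    exists (i :: p); simpl; rewrite Hn; auto.
Qed.

Lemma modlist_ext i h h' l : (forall x, h x = h' x) -> modlist i h l = modlist i h' l.
Proof. revert i; induction l; intros [|i] E; simpl; f_equal; auto. Qed.

Lemma modlist_id i h l : h (nth i l (ONode [])) = nth i l (ONode []) -> modlist i h l = l.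
Proof. revert i; induction l; intros [|i] E; simpl in *; f_equal; auto. Qed.

Lemma modlist_comp i f g l : modlist i f (modlist i g l) = modlist i (fun x => f (g x)) l.
Proof. revert i; induction l; intros [|i]; simpl; f_equal; auto. Qed.

Lemma modlist_length i h l : length (modlist i h l) = length l.
Proof. revert i; induction l; intros [|i]; simpl; f_equal; auto. Qed.

Lemma modlist_nth i h l : (i < length l)%nat ->
  nth i (modlist i h l) (ONode []) = h (nth i l (ONode [])).
Proof. revert i; induction l; intros [|i] Hi; simpl in *; try lia; auto. apply IHl; lia. Qed.

Lemma modlist_app h la c lb : modlist (length la) h (la ++ c :: lb) = la ++ h c :: lb.
Proof. induction la; simpl; f_equal; auto. Qed.

Lemma modat_at p t : modat p (fun _ => at_ p t) t = t.
Proof.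
  revert t; induction p as [|i p IH]; intros [l]; simpl; auto.
  f_equal. apply modlist_id. apply IH.
Qed.

Lemma modat_comp p f g t : modat p f (modat p g t) = modat p (fun x => f (g x)) t.
Proof.
  revert t; induction p as [|i p IH]; intros [l]; simpl; auto.
  f_equal. rewrite modlist_comp. apply modlist_ext. auto.
Qed.

Lemma Forall2_oiso_refl l : Forall2 oiso l l.
Proof. induction l; constructor; auto using oiso_refl. Qed.

Lemma modat_iso p f g t : (forall x, oiso (f x) (g x)) -> oiso (modat p f t) (modat p g t).
Proof.
  revert t; induction p as [|i p IH]; intros [l] E; simpl; auto.
  apply oiso_node with (modlist i (modat p g) l); [|apply Permutation_refl].
  revert i; induction l; intros [|i]; simpl; constructor; auto using oiso_refl, Forall2_oiso_refl.
Qed.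

Lemma modat_valid p f t : valid p t -> valid p (modat p f t).
Proof.
  revert t; induction p as [|i p IH]; intros [l] V; simpl in *; auto.
  destruct V as [Hi V]. rewrite modlist_length, modlist_nth; auto.
Qed.

Lemma list_sum_modlist i h l : (i < length l)%nat ->
  (list_sum (map osize (modlist i h l)) + osize (nth i l (ONode []))
   = list_sum (map osize l) + osize (h (nth i l (ONode []))))%nat.
Proof. revert i; induction l; intros [|i] Hi; simpl in *; try lia.
  specialize (IHl i ltac:(lia)). lia. Qed.

Lemma modat_size p v t : valid p t ->
  (osize (modat p (fun _ => v) t) + osize (at_ p t) = osize t + osize v)%nat.
Proof.
  revert t; induction p as [|i p IH]; intros [l] V; simpl in *; auto. lia.
  destruct V as [Hi V]. specialize (IH _ V).
  pose proof (list_sum_modlist i (modat p (fun _ => v)) l Hi). lia.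
Qed.

Definition okT (m : option nat) (t : otree) : Prop :=
  forall l, subtree (ONode l) t -> children_ok m l.

Lemma okT_node m l : okT m (ONode l) <-> children_ok m l /\ Forall (okT m) l.
Proof.
  split.
  - intro H. split. apply H, st_refl.
    apply Forall_forall. intros c Hc l' Hs. apply H. econstructor; eauto.
  - intros [H F] l' Hs. inversion Hs; subst; auto.
    rewrite Forall_forall in F. eapply F; eauto.
Qed.

Lemma okT_modat m p v t : okT m t -> okT m v -> okT m (modat p (fun _ => v) t).
Proof.
  revert t; induction p as [|i p IH]; intros [l] Ht Hv; simpl; auto.
  apply okT_node in Ht as [C F]. apply okT_node. split.
  - unfold children_ok in *. destruct m; auto. rewrite modlist_length; auto.
  - clear C. revert i; induction F; intros [|i]; simpl; constructor; auto.
Qed.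

Lemma transfer (F : otree -> otree) (HF : forall u v, oiso u v -> oiso (F u) (F v)) p :
  forall t r, oiso t r -> valid p t ->
  exists q, valid q r /\ oiso (modat p F t) (modat q F r).
Proof.
  induction p as [|i p IH]; intros [l1] [l2] H V; simpl in *.
  - exists []; simpl; auto.
  - destruct V as [Hi V].
    destruct (oiso_inv _ _ H) as [l3 [Fo P]].
    destruct (nth_split l1 (ONode []) Hi) as [la [lb [E1 Ela]]].
    set (c := nth i l1 (ONode [])) in *.
    clearbody c. rewrite E1 in Fo.
    destruct (Forall2_app_inv_l _ _ Fo) as [l3a [l3r [Fa [Fr E3]]]].
    destruct l3r as [|cp l3b]; [inversion Fr|]. apply Forall2_cons_iff in Fr as [Hcc Fb]. subst l3. rename cp into cprime.
    assert (Hin : In cprime l2). { eapply Permutation_in; eauto. apply in_elt. }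
    destruct (in_split _ _ Hin) as [l2a [l2b E2]]. subst l2.
    pose proof (Permutation_app_inv _ _ _ _ _ P) as P'.
    destruct (IH _ _ Hcc V) as [q [Vq Iq]].
    exists (length l2a :: q). split.
    + simpl. rewrite length_app; simpl. split; [lia|].
      rewrite app_nth2, Nat.sub_diag by lia. simpl. auto.
    + simpl. rewrite E1. rewrite <- Ela, !modlist_app.
      apply oiso_node with (l3a ++ modat q F cprime :: l3b).
      * apply Forall2_app; auto.
      * apply Permutation_elt; auto.
Qed.

Fixpoint paux (pf : otree -> list (list nat)) (k : nat) (l : list otree) : list (list nat) :=
  match l with
  | [] => []
  | c :: l' => map (cons k) (pf c) ++ paux pf (S k) l'
  end.

Fixpoint paths (t : otree) : list (list nat) :=
  match t with ONode l => [] :: paux paths 0 l end.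

Lemma paths_complete t : forall p, valid p t -> In p (paths t).
Proof.
  induction t as [l IH] using otree_ind2; intros [|i p] V; simpl in *; auto.
  right. destruct V as [Hi V].
  change i with (0 + i)%nat. generalize 0%nat as k. revert i Hi V.
  induction IH; intros i Hi V k; simpl in *; try lia.
  apply in_or_app. destruct i as [|i].
  - left. rewrite Nat.add_0_r. apply in_map. auto.
  - right. replace (k + S i)%nat with (S k + i)%nat by lia. apply IHIH; auto. lia.
Qed.

Lemma paths_length t : length (paths t) = osize t.
Proof.
  induction t as [l IH] using otree_ind2; simpl. f_equal.
  generalize 0%nat. induction IH; intro k; simpl; auto.
  rewrite length_app, length_map, H, IHIH. auto.
Qed.

Lemma lists_bounded {A : Type} (L : list A) N : exists LL, forall l,
  (length l <= N)%nat -> (forall x, In x l -> In x L) -> In l LL.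
Proof.
  induction N as [|N [LL IH]].
  - exists [[]]. intros [|x l] Hl _; simpl in *; [auto|lia].
  - exists ([] :: flat_map (fun x => map (cons x) LL) L).
    intros [|x l] Hl Hin; simpl; [auto|right].
    apply in_flat_map. exists x. split; [apply Hin; simpl; auto|].
    apply in_map. apply IH; simpl in *; [lia|]. intros; apply Hin; simpl; auto.
Qed.

Lemma osize_pos t : (1 <= osize t)%nat.
Proof. destruct t; simpl; lia. Qed.

Lemma le_list_sum c l : In c l -> (osize c <= list_sum (map osize l))%nat.
Proof. induction l; simpl; [intros []|]. intros [H|H]; subst; try lia. specialize (IHl H); lia. Qed.

Lemma length_le_list_sum l : (length l <= list_sum (map osize l))%nat.
Proof. induction l; simpl; auto. pose proof (osize_pos a); lia. Qed.

Lemma trees_bounded j : exists L, forall t, (osize t <= j)%nat -> In t L.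
Proof.
  induction j as [|j [L IH]].
  - exists []. intros t H. pose proof (osize_pos t); lia.
  - destruct (lists_bounded L j) as [LL HLL].
    exists (map ONode LL). intros [l] H. simpl in H. apply in_map. apply HLL.
    + pose proof (length_le_list_sum l); lia.
    + intros x Hx. apply IH. pose proof (le_list_sum _ _ Hx); lia.
Qed.

Lemma build_reps (P : otree -> Prop) L : exists s, Forall P s /\
  ForallOrdPairs (fun a b => ~ oiso a b) s /\
  forall t, P t -> (exists u, In u L /\ oiso t u) -> exists u, In u s /\ oiso t u.
Proof.
  induction L as [|b L [s [H1 [H2 H3]]]].
  - exists []. split; [constructor|split; [constructor|]]. intros t _ [u [[] _]].
  - destruct (classic (exists t, P t /\ oiso t b /\ ~ exists u, In u s /\ oiso t u))
      as [[t [Pt [Itb Nt]]]|N].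
    + exists (t :: s). split; [constructor; auto|]. split.
      * constructor; auto. apply Forall_forall. intros x Hx Hi. apply Nt; eauto.
      * intros t0 P0 [u [[Hu|Hu] Hi]].
        -- subst u. exists t; split; simpl; auto.
           eapply oiso_trans; eauto. apply oiso_sym; auto.
        -- destruct (H3 t0 P0) as [w [Hw Iw]]; eauto. exists w; simpl; auto.
    + exists s. split; auto. split; auto.
      intros t0 P0 [u [[Hu|Hu] Hi]].
      * subst u. apply NNPP. intro Hn. apply N. exists t0; auto.
      * apply H3; eauto.
Qed.

Lemma count_le s : forall L, ForallOrdPairs (fun a b => ~ oiso a b) s ->
  (forall a, In a s -> exists b, In b L /\ oiso a b) -> (length s <= length L)%nat.
Proof.
  induction s as [|a s IH]; intros L H1 H2; simpl; [lia|].
  inversion H1 as [|a' s' Fa Fs]; subst.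
  destruct (H2 a (or_introl eq_refl)) as [b [Hb Iab]].
  destruct (in_split _ _ Hb) as [L1 [L2 E]]. subst L.
  assert (length s <= length (L1 ++ L2))%nat.
  { apply IH; auto. intros a0 Ha0.
    destruct (H2 a0 (or_intror Ha0)) as [b0 [Hb0 I0]].
    exists b0. split; auto.
    apply in_app_or in Hb0 as [Hb0|[Hb0|Hb0]]; auto using in_or_app.
    exfalso. subst b0. rewrite Forall_forall in Fa. apply (Fa a0 Ha0).
    eapply oiso_trans; eauto. apply oiso_sym; auto. }
  rewrite !length_app in *. simpl. lia.
Qed.

Lemma ncl_spec P L0 : (forall t, P t -> In t L0) -> nclasses P (ncl P).
Proof.
  intros H. unfold ncl. apply epsilon_spec.
  destruct (build_reps P L0) as [s [H1 [H2 H3]]].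
  exists (length s), s. repeat split; auto.
  intros t Pt. apply H3; auto. exists t; split; auto using oiso_refl.
Qed.

Lemma ncl_le P L0 L : (forall t, P t -> In t L0) ->
  (forall t, P t -> exists u, In u L /\ oiso t u) -> (ncl P <= length L)%nat.
Proof.
  intros H0 H. destruct (ncl_spec P L0 H0) as [s [Hl [F [O C]]]].
  rewrite <- Hl. apply count_le; auto.
  intros a Ha. apply H. rewrite Forall_forall in F. auto.
Qed.

Lemma cardT_reps m j : exists S, length S = cardT m j /\ Forall (Tm m j) S /\
  forall t, Tm m j t -> exists u, In u S /\ oiso t u.
Proof.
  destruct (trees_bounded j) as [L HL].
  assert (H : nclasses (Tm m j) (cardT m j)).
  { apply (ncl_spec _ L). intros t [E _]. apply HL. lia. }
  destruct H as [s [H1 [H2 [_ H3]]]]. exists s; auto.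
Qed.

Definition addtwo (s0 : otree) (u : otree) : otree :=
  match u with ONode l => ONode (s0 :: s0 :: l) end.

Lemma addtwo_iso s0 u v : oiso u v -> oiso (addtwo s0 u) (addtwo s0 v).
Proof.
  destruct u as [lu], v as [lv]; intro H. destruct (oiso_inv _ _ H) as [l3 [F P]].
  simpl. apply oiso_node with (s0 :: s0 :: l3); auto using oiso_refl.
Qed.

Fixpoint rsum (l : list R) : R := match l with [] => 0 | x :: l' => x + rsum l' end.

Lemma rsum_le {A : Type} (f g : A -> R) l : (forall a, In a l -> f a <= g a) ->
  rsum (map f l) <= rsum (map g l).
Proof. induction l; simpl; intros H; [lra|]. pose proof (H a (or_introl eq_refl)).
  assert (rsum (map f l) <= rsum (map g l)) by auto. lra. Qed.

Lemma INR_length_flat_map {A B : Type} (g : A -> list B) l :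
  INR (length (flat_map g l)) = rsum (map (fun a => INR (length (g a))) l).
Proof. induction l; simpl; auto. rewrite length_app, plus_INR, IHl; auto. Qed.

Lemma flat_map_len_le {A B : Type} (g : A -> list B) l c :
  (forall a, In a l -> (length (g a) <= c)%nat) -> (length (flat_map g l) <= length l * c)%nat.
Proof. induction l; simpl; intros H; auto. rewrite length_app.
  pose proof (H a (or_introl eq_refl)). assert (length (flat_map g l) <= length l * c)%nat by auto.
  lia. Qed.

Lemma perm_two {A : Type} (la lm lb : list A) s s' :
  Permutation (la ++ s :: lm ++ s' :: lb) (s :: s' :: la ++ lm ++ lb).
Proof.
  eapply Permutation_trans. apply Permutation_sym, Permutation_middle.
  apply perm_skip. rewrite app_assoc. eapply Permutation_trans.
  apply Permutation_sym, Permutation_middle. rewrite app_assoc. apply Permutation_refl.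
Qed.

Lemma list_sum_perm' (l1 l2 : list otree) : Permutation l1 l2 ->
  list_sum (map osize l1) = list_sum (map osize l2).
Proof. intro P. apply list_sum_perm, Permutation_map, P. Qed.

Lemma subtree_trans u v t : subtree u v -> subtree v t -> subtree u t.
Proof. intros H1 H2; induction H2; auto. econstructor; eauto. Qed.

Section Main.
Variables (m : option nat) (x : R) (n : nat) (Rep : nat -> list otree).
Hypothesis HS : forall j, length (Rep j) = cardT m j /\ Forall (Tm m j) (Rep j) /\
  forall t, Tm m j t -> exists u, In u (Rep j) /\ oiso t u.

Definition bigL : list otree :=
  flat_map (fun k => if Rle_dec x (INR k) then
     flat_map (fun r => flat_map (fun q => map (fun s0 => modat q (addtwo s0) r) (Rep k))
       (paths r)) (Rep (n - 2 * k)) else []) (seq 0 (S n)).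

Lemma cover : forall t, Tm m n t ->
  (exists l, subtree (ONode l) t /\
    exists i j, (i < j < length l)%nat /\
      oiso (nth i l (ONode nil)) (nth j l (ONode nil)) /\
      x <= INR (osize (nth i l (ONode nil)))) ->
  exists u, In u bigL /\ oiso t u.
Proof.
  intros t [Hn Hok] [l [Hsub [i [j [Hij [Hiso Hx]]]]]].
  assert (Hok' : okT m t) by exact Hok.
  remember (nth i l (ONode [])) as s eqn:Es. remember (nth j l (ONode [])) as s' eqn:Es'.
  assert (Hi : (i < length l)%nat) by lia.
  destruct (nth_split l (ONode []) Hi) as [la [lr [El Ela]]].
  rewrite <- Es in El.
  assert (Hj : nth j l (ONode []) = nth (j - i - 1) lr (ONode [])).
  { rewrite El, app_nth2 by lia. rewrite Ela. remember (j - i - 1)%nat as d. replace (j - i)%nat with (S d) by lia. reflexivity. }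
  assert (Hlr : (j - i - 1 < length lr)%nat).
  { assert (length l = length la + S (length lr))%nat by (rewrite El, length_app; reflexivity). lia. }
  destruct (nth_split lr (ONode []) Hlr) as [lm [lb [Er _]]].
  rewrite <- Hj, <- Es' in Er. rewrite Er in El.
  set (l' := la ++ lm ++ lb).
  assert (Pl : Permutation l (s :: s' :: l')) by (rewrite El; apply perm_two).
  set (k := osize s).
  assert (Hk' : osize s' = k) by (symmetry; apply osize_iso; auto).
  destruct (subtree_path _ _ Hsub) as [p [Vp Ap]].
  set (t' := modat p (fun _ => ONode l') t).
  pose proof (modat_size p (ONode l') t Vp) as Hsz. fold t' in Hsz. rewrite Ap in Hsz.
  assert (Hsl : osize (ONode l) = (osize (ONode l') + k + k)%nat).
  { simpl. rewrite (list_sum_perm' _ _ Pl). simpl. lia. }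
  assert (Ht'sz : osize t' = (n - 2 * k)%nat) by lia.
  assert (Hkn : (k <= n)%nat) by lia.
  assert (Hol : okT m (ONode l)) by (intros l0 H0; apply Hok'; eapply subtree_trans; eauto).
  apply okT_node in Hol as [Cl Fl].
  assert (Fl' : Forall (okT m) (s :: s' :: l')) by (eapply Permutation_Forall; eauto).
  apply Forall_cons_iff in Fl' as [Os Fl'']. apply Forall_cons_iff in Fl'' as [Os' Fl3].
  assert (Ol' : okT m (ONode l')).
  { apply okT_node; split; auto. unfold children_ok in *. destruct m; auto.
    pose proof (Permutation_length Pl) as PL; simpl in PL; lia. }
  assert (Tt' : Tm m (n - 2*k) t') by (split; [exact Ht'sz | apply okT_modat; auto]).
  assert (Ts : Tm m k s) by (split; [reflexivity| exact Os]).
  destruct (proj2 (proj2 (HS k)) s Ts) as [s0 [Hs0 Is0]].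
  destruct (proj2 (proj2 (HS (n-2*k))) t' Tt') as [r [Hr Ir]].
  destruct (transfer (addtwo s0) (addtwo_iso s0) p t' r Ir (modat_valid _ _ _ Vp)) as [q [Vq Iq]].
  exists (modat q (addtwo s0) r). split.
  - unfold bigL. apply in_flat_map. exists k. split. apply in_seq; lia.
    destruct (Rle_dec x (INR k)) as [_|N]; [|exfalso; apply N; exact Hx].
    apply in_flat_map. exists r. split; auto. apply in_flat_map. exists q. split.
    apply paths_complete; auto. apply (in_map (fun s1 => modat q (addtwo s1) r)); auto.
  - eapply oiso_trans; [|exact Iq].
    assert (E0 : t = modat p (fun _ => ONode l) t) by (rewrite <- Ap; symmetry; apply modat_at).
    enough (X : oiso (modat p (fun _ => ONode l) t) (modat p (addtwo s0) t')) by (rewrite <- E0 in X; exact X).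
    unfold t'. rewrite modat_comp. apply modat_iso. intros y; simpl.
    eapply oiso_trans. apply oiso_node with l; [apply Forall2_oiso_refl| exact Pl].
    apply oiso_node with (s0::s0::l'); [|apply Permutation_refl].
    constructor; [exact Is0| constructor; [ | apply Forall2_oiso_refl]].
    eapply oiso_trans; [apply oiso_sym; exact Hiso| exact Is0].
Qed.

Lemma bigL_bound : INR (length bigL) <= rsum (map (fun k => if Rle_dec x (INR k) then
   INR (n - 2*k) * INR (cardT m (n - 2*k)) * INR (cardT m k) else 0) (seq 0 (S n))).
Proof.
  unfold bigL. rewrite INR_length_flat_map. apply rsum_le. intros k _.
  destruct (Rle_dec x (INR k)); [|simpl; lra].
  rewrite <- !mult_INR. apply le_INR.
  destruct (HS (n - 2*k)) as [L1 [F1 _]]. destruct (HS k) as [L2 _].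
  rewrite <- L1, <- L2.
  replace ((n - 2 * k) * length (Rep (n - 2 * k)) * length (Rep k))%nat
    with (length (Rep (n - 2 * k)) * ((n - 2 * k) * length (Rep k)))%nat by lia.
  apply flat_map_len_le. intros r0 Hr.
  rewrite Forall_forall in F1. destruct (F1 r0 Hr) as [Er _].
  rewrite <- Er, <- paths_length. apply flat_map_len_le. intros q _. rewrite length_map. lia.
Qed.

Lemma ncl_A_bound gamma : x = Rpower (INR n) gamma ->
  INR (ncl (fun t => Tm m n t /\ inA gamma n t)) <=
  rsum (map (fun k => if Rle_dec x (INR k) then
   INR (n - 2*k) * INR (cardT m (n - 2*k)) * INR (cardT m k) else 0) (seq 0 (S n))).
Proof.
  intros Ex. eapply Rle_trans; [|apply bigL_bound]. apply le_INR.
  destruct (trees_bounded n) as [L0 HL0].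
  apply (ncl_le _ L0).
  - intros t [[E _] _]. apply HL0. lia.
  - intros t [Ht HA]. apply cover; auto. unfold inA in HA. rewrite Ex. exact HA.
Qed.
End Main.

Lemma ncl_A_bound' m gamma n :
  INR (ncl (fun t => Tm m n t /\ inA gamma n t)) <=
  rsum (map (fun k => if Rle_dec (Rpower (INR n) gamma) (INR k) then
   INR (n - 2*k) * INR (cardT m (n - 2*k)) * INR (cardT m k) else 0) (seq 0 (S n))).
Proof.
  assert (HS : exists Rep : nat -> list otree, forall j, length (Rep j) = cardT m j /\ Forall (Tm m j) (Rep j) /\ forall t, Tm m j t -> exists u, In u (Rep j) /\ oiso t u).
  { exists (fun j => proj1_sig (constructive_indefinite_description _ (cardT_reps m j))).
    intro j. exact (proj2_sig (constructive_indefinite_description _ (cardT_reps m j))). }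
  destruct HS as [Rep HS].
  apply (ncl_A_bound m _ n Rep HS gamma eq_refl).
Qed.

Lemma Rpower_pos x y : 0 < Rpower x y.
Proof. unfold Rpower. apply exp_pos. Qed.

Lemma rsum_ge_elem (f : nat -> R) l a : (forall b, 0 <= f b) -> In a l -> f a <= rsum (map f l).
Proof.
  intros H; induction l; simpl; [tauto|]. intros [E|E]; subst.
  - assert (0 <= rsum (map f l)). { clear IHl. induction l; simpl; [lra|]. pose proof (H a0); lra. }
    lra.
  - pose proof (H a0); specialize (IHl E); lra.
Qed.

Lemma rsum_nonneg (f : nat -> R) l : (forall b, 0 <= f b) -> 0 <= rsum (map f l).
Proof. intros H; induction l; simpl; [lra|]. pose proof (H a); lra. Qed.

Lemma rsum_scale {A : Type} (c : R) (f : A -> R) l : rsum (map (fun a => c * f a) l) = c * rsum (map f l).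
Proof. induction l; simpl; [ring|]. rewrite IHl; ring. Qed.

Lemma geom rho x (Hr : 1 < rho) : forall N a,
  rsum (map (fun k => if Rle_dec x (INR k) then Rpower rho (- INR k) else 0) (seq a N))
  <= rho / (rho - 1) * Rpower rho (- Rmax x (INR a)).
Proof.
  assert (Hc : 0 < rho / (rho - 1)) by (apply Rdiv_lt_0_compat; lra).
  induction N as [|N IH]; intro a; simpl.
  - pose proof (Rpower_pos rho (- Rmax x (INR a))). nra.
  - specialize (IH (S a)). rewrite S_INR in IH.
    destruct (Rle_dec x (INR a)) as [Hxa|Hxa].
    + rewrite Rmax_right in IH by lra. rewrite Rmax_right by lra.
      replace (- (INR a + 1)) with (- INR a + - 1) in IH by ring.
      rewrite Rpower_plus in IH.
      assert (Hm1 : Rpower rho (-1) = / rho) by (replace (-1) with (- (1)) by ring; rewrite Rpower_Ropp, Rpower_1 by lra; reflexivity).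
      rewrite Hm1 in IH.
      set (P := Rpower rho (- INR a)) in *.
      assert (E : P + rho / (rho - 1) * (P * / rho) = rho / (rho - 1) * P) by (field; lra).
      lra.
    + rewrite (Rmax_left x (INR a)) by lra.
      assert (Rpower rho (- Rmax x (INR a + 1)) <= Rpower rho (- x)).
      { apply Rle_Rpower; [lra|]. pose proof (Rmax_l x (INR a + 1)); lra. }
      assert (rho / (rho - 1) * Rpower rho (- Rmax x (INR a + 1)) <= rho / (rho - 1) * Rpower rho (- x))
        by (apply Rmult_le_compat_l; lra).
      lra.
Qed.

Lemma Q_le_1 j : Rpower (INR j) (-3/2) <= 1.
Proof.
  destruct j as [|j].
  - simpl. unfold Rpower, ln. destruct (Rlt_dec 0 0) as [r|r]; [exfalso; exact (Rlt_irrefl 0 r)|]. rewrite Rmult_0_r, exp_0. lra.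
  - rewrite <- (Rpower_O (INR (S j))) by (rewrite S_INR; pose proof (pos_INR j); lra).
    apply Rle_Rpower; [rewrite S_INR; pose proof (pos_INR j); lra | lra].
Qed.

Theorem lemma24 (m : option nat) (gamma kappa rho : R) :
  valid_m m -> 0 < gamma < 1 ->
  0 < kappa -> 1 < rho -> otter_asymp m kappa rho ->
  exists C : R, exists N : nat, forall n : nat, (N <= n)%nat ->
    probA m gamma n <=
      C * Rpower rho (- Rpower (INR n) gamma) * Rpower (INR n) (5/2).
Proof.
  intros Hm Hg Hk Hr Hot.
  destruct (Hot (1/2) ltac:(lra)) as [N0 HN0].
  set (t := fun j => INR (cardT m j)).
  set (dd := fun n => kappa * rho ^ n * Rpower (INR n) (-3/2)).
  assert (Hdd : forall n, 0 < dd n).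
  { intro n. unfold dd. pose proof (Rpower_pos (INR n) (-3/2)).
    pose proof (pow_lt rho n ltac:(lra)). apply Rmult_lt_0_compat; [apply Rmult_lt_0_compat|]; lra. }
  assert (Ht0 : forall j, 0 <= t j) by (intro; apply pos_INR).
  assert (Hbd : forall n, (n >= N0)%nat -> dd n / 2 <= t n /\ t n <= 3/2 * dd n).
  { intros n Hn. specialize (HN0 n Hn). unfold R_dist in HN0.
    apply Rabs_def2 in HN0. change (INR (cardT m n)) with (t n) in HN0. change (kappa * rho ^ n * Rpower (INR n) (-3/2)) with (dd n) in HN0.
    specialize (Hdd n).
    assert (E : t n = t n / dd n * dd n) by (field; lra).
    split; rewrite E; nra. }
  set (M := rsum (map t (seq 0 N0))).
  assert (HM : 0 <= M) by (apply rsum_nonneg; auto).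
  set (D := 3/2 * kappa + M).
  assert (HD : 0 <= D) by (unfold D; lra).
  assert (Dbound : forall j, t j <= D * Rpower rho (INR j)).
  { intro j. assert (HP : 1 <= Rpower rho (INR j)).
    { rewrite <- (Rpower_O rho) by lra. apply Rle_Rpower; [lra|apply pos_INR]. }
    destruct (Nat.lt_ge_cases j N0) as [Hj|Hj].
    - assert (t j <= M) by (apply rsum_ge_elem; auto; apply in_seq; lia).
      unfold D. nra.
    - destruct (Hbd j Hj) as [_ H2]. unfold dd in H2.
      rewrite Rpower_pow by lra. rewrite Rpower_pow in HP by lra.
      pose proof (Q_le_1 j). pose proof (Rpower_pos (INR j) (-3/2)).
      assert (kappa * rho ^ j * Rpower (INR j) (-3/2) <= kappa * rho ^ j * 1).
      { apply Rmult_le_compat_l; [|lra]. nra. }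
      unfold D. nra. }
  set (c := rho / (rho - 1)).
  assert (Hc : 0 < c) by (apply Rdiv_lt_0_compat; lra).
  exists (2 * D ^ 2 * c / kappa), (Nat.max N0 1).
  intros n Hn.
  assert (HnN0 : (n >= N0)%nat) by lia.
  assert (Hn1 : 1 <= INR n) by (apply (le_INR 1); lia).
  set (x := Rpower (INR n) gamma).
  assert (Hx : 0 < x) by apply Rpower_pos.
  set (A := INR (ncl (fun t => Tm m n t /\ inA gamma n t))).
  set (K := INR n * D ^ 2 * Rpower rho (INR n)).
  assert (HK : 0 <= K).
  { unfold K. pose proof (Rpower_pos rho (INR n)). pose proof (pow2_ge_0 D).
    apply Rmult_le_pos; [apply Rmult_le_pos|]; lra. }
  assert (HA : A <= K * (c * Rpower rho (- x))).
  { eapply Rle_trans; [apply ncl_A_bound'|]. fold x.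
    eapply Rle_trans.
    - apply (rsum_le _ (fun k => K * (if Rle_dec x (INR k) then Rpower rho (- INR k) else 0))).
      intros k _. destruct (Rle_dec x (INR k)) as [Hxk|Hxk]; [|lra].
      fold (t (n - 2 * k)%nat). fold (t k).
      pose proof (Rpower_pos rho (- INR k)).
      destruct (Nat.le_gt_cases (2 * k) n) as [H2k|H2k].
      + pose proof (Dbound (n - 2 * k)%nat) as B1. pose proof (Dbound k) as B2.
        assert (Hle : INR (n - 2 * k) <= INR n) by (apply le_INR; lia).
        pose proof (pos_INR (n - 2 * k)). pose proof (Ht0 (n - 2 * k)%nat). pose proof (Ht0 k).
        apply Rle_trans with (INR n * (D * Rpower rho (INR (n - 2 * k))) * (D * Rpower rho (INR k))).
        { apply Rmult_le_compat. apply Rmult_le_pos; [apply pos_INR|apply Ht0]. apply Ht0.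
          apply Rmult_le_compat. apply pos_INR. apply Ht0. apply le_INR; lia. apply Dbound. apply Dbound. }
        assert (E : Rpower rho (INR (n - 2 * k)) * Rpower rho (INR k)
                    = Rpower rho (INR n) * Rpower rho (- INR k)).
        { rewrite <- !Rpower_plus. f_equal. rewrite minus_INR, mult_INR by lia. simpl. lra. }
        unfold K. replace (INR n * (D * Rpower rho (INR (n - 2 * k))) * (D * Rpower rho (INR k)))
          with (INR n * D ^ 2 * (Rpower rho (INR (n - 2 * k)) * Rpower rho (INR k))) by ring.
        rewrite E. lra.
      + replace (n - 2 * k)%nat with 0%nat by lia. simpl. rewrite !Rmult_0_l.
        apply Rmult_le_pos; lra.
    - rewrite rsum_scale. apply Rmult_le_compat_l; auto.
      eapply Rle_trans; [apply (geom rho x Hr)|]. simpl. rewrite Rmax_left by lra. fold c. lra. }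
  unfold probA. fold A. fold (t n). fold (cardT m n) in *.
  destruct (Hbd n HnN0) as [L1 _]. specialize (Hdd n).
  assert (HA0 : 0 <= A) by apply pos_INR.
  eapply Rle_trans with (K * (c * Rpower rho (- x)) / (dd n / 2)).
  { unfold Rdiv. apply Rmult_le_compat; auto.
    - left; apply Rinv_0_lt_compat; lra.
    - apply Rinv_le_contravar; lra. }
  right. unfold K, dd.
  assert (HQ : Rpower (INR n) (-3/2) = / Rpower (INR n) (3/2)).
  { rewrite <- Rpower_Ropp. f_equal. lra. }
  assert (H52 : Rpower (INR n) (5/2) = INR n * Rpower (INR n) (3/2)).
  { replace (5/2) with (1 + 3/2) by lra. rewrite Rpower_plus, Rpower_1 by lra. reflexivity. }
  rewrite HQ, H52, Rpower_pow by lra. unfold c.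
  pose proof (Rpower_pos (INR n) (3/2)). pose proof (pow_lt rho n ltac:(lra)).
  field. repeat split; lra.
Qed.
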